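(* Let $R$ be a commutative ring with $1$, let $A$ and $B$ be $R$-algebras, let $C,J$ be two-sided ideals of $A$, let $I$ be a two-sided ideal of $C$ (viewed as a possibly non-unital ring) and $K$ a two-sided ideal of $B$, and let $f:C\to B$ and $g:B\to C+J$ be $R$-linear maps. Assume: (1) $(C\cap J)C\subseteq I$, $C(C\cap J)\subseteq I$ and $I\subseteq C\cap J$; (2) $g(K)\subseteq J$; (3) $f(I)\subseteq K$; (4) $f$ is surjective; (5) $g$ sends idempotents to idempotents; (6) the $R$-linear maps $\overline f:C/I\to B/K$ and $\overline g:B/K\to(C+J)/J$ induced by $f$ and $g$ are multiplicative, i.e. $\overline f(xy)=\overline f(x)\overline f(y)$ and $\overline g(vw)=\overline g(v)\overline g(w)$ for all $x,y\in C/I$, $v,w\in B/K$; (7) the natural isomorphism $s:C/(C\cap J)\to(C+J)/J$ and the natural projection $q:C/I\to C/(C\cap J)$ satisfy $sq=\overline g\,\overline f$; (8) every idempotent of $A$ has a decomposition as a finite sum of pairwise orthogonal local idempotents, unique up to conjugation. Let $b\in B$ be a local idempotent with $b\notin K$. Then $g(b)\in C+J\subseteq A$ and, by (5) and (8), there are a unique $n\in\mathbb N$ and a set $\{a_0,\dots,a_n\}\subseteq A$ of pairwise orthogonal local idempotents, unique up to conjugation, with $g(b)=\sum_{i=0}^na_i$. There is exactly one $j\in\{0,\dots,n\}$ with $a_j\in C\setminus(C\cap J)$, and $a:=a_j$ satisfies $g(b)\equiv a\pmod J$ and $f(a)\equiv b\pmod K$.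
   Context: An idempotent $e$ of a ring $D$ is local if $eDe$ is a local ring. Idempotents $e,e'$ are orthogonal if $ee'=e'e=0$. *)

(* Defs.v *)
From HB Require Import structures.
From mathcomp Require Import all_boot all_order all_algebra.
Set Implicit Arguments. Unset Strict Implicit. Unset Printing Implicit Defensive.
Import GRing.Theory.
Local Open Scope ring_scope.

Section Defs.
Variable A : nzRingType.

Definition idem (e : A) : Prop := e * e = e.

Definition unitA (u v : A) : Prop := u * v = 1 /\ v * u = 1.

(* e is a local idempotent: e is idempotent and the corner ring eAe (with
   identity e) is local, i.e. e <> 0 and for every element y of eAe, y or
   e - y is invertible in eAe. *)
Definition local_idem (e : A) : Prop :=
  idem e /\ e != 0 /\
  forall x : A,
    let y := e * x * e in
    (exists z : A, y * (e * z * e) = e /\ (e * z * e) * y = e) \/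
    (exists z : A, (e - y) * (e * z * e) = e /\ (e * z * e) * (e - y) = e).

Definition orth (e e' : A) : Prop := e * e' = 0 /\ e' * e = 0.

Definition local_decomp (e : A) (n : nat) (a : 'I_n -> A) : Prop :=
  (forall i, local_idem (a i)) /\
  (forall i j, i != j -> orth (a i) (a j)) /\
  e = \sum_(i < n) a i.

Definition two_sided_ideal (S : {pred A}) : Prop :=
  0 \in S /\ (forall x y, x \in S -> y \in S -> x + y \in S) /\
  (forall x, x \in S -> - x \in S) /\
  (forall a x, x \in S -> a * x \in S /\ x * a \in S).

Definition ideal_in (C I : {pred A}) : Prop :=
  {subset I <= C} /\
  0 \in I /\ (forall x y, x \in I -> y \in I -> x + y \in I) /\
  (forall x, x \in I -> - x \in I) /\
  (forall c x, c \in C -> x \in I -> c * x \in I /\ x * c \in I).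
End Defs.

(* Main.v *)
Require Import Defs.
From HB Require Import structures.
From mathcomp Require Import all_boot all_order all_algebra.
Import GRing.Theory.
Local Open Scope ring_scope.
Set Implicit Arguments. Unset Strict Implicit.

Section IdealLemmas.
Variables (T : nzRingType) (S : {pred T}).
Hypothesis HS : two_sided_ideal S.

Lemma id0 : 0 \in S. Proof. by case: HS. Qed.
Lemma idD x y : x \in S -> y \in S -> x + y \in S.
Proof. by case: HS => _ [H _]; apply: H. Qed.
Lemma idN x : x \in S -> - x \in S.
Proof. by case: HS => _ [_ [H _]]; apply: H. Qed.
Lemma idB x y : x \in S -> y \in S -> x - y \in S.
Proof. by move=> hx hy; apply: idD => //; apply: idN. Qed.
Lemma idMl a x : x \in S -> a * x \in S.
Proof. by case: HS => _ [_ [_ H]] hx; case: (H a x hx). Qed.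
Lemma idMr a x : x \in S -> x * a \in S.
Proof. by case: HS => _ [_ [_ H]] hx; case: (H a x hx). Qed.
Lemma id_sum (I : finType) (P : pred I) (F : I -> T) :
  (forall i, P i -> F i \in S) -> \sum_(i | P i) F i \in S.
Proof.
move=> H; apply: (big_ind (fun x => x \in S)); first exact: id0.
  by move=> x y; apply: idD.
exact: H.
Qed.

Definition cg x y := x - y \in S.
Lemma cg_refl x : cg x x. Proof. by rewrite /cg subrr id0. Qed.
Lemma cg_sym x y : cg x y -> cg y x.
Proof. by rewrite /cg => h; rewrite -opprB; apply: idN. Qed.
Lemma cg_trans x y z : cg x y -> cg y z -> cg x z.
Proof.
rewrite /cg => h1 h2; have := idD h1 h2.
by rewrite addrA subrK.
Qed.
Lemma cg_eq x y : x = y -> cg x y. Proof. by move=> ->; apply: cg_refl. Qed.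
Lemma cg_add x x' y y' : cg x x' -> cg y y' -> cg (x + y) (y' + x') -> True.
Proof. by []. Qed.
Lemma cg_addP x x' y y' : cg x x' -> cg y y' -> cg (x + y) (x' + y').
Proof.
rewrite /cg => h1 h2; have := idD h1 h2.
by rewrite opprD addrACA.
Qed.
Lemma cg_mul x x' y y' : cg x x' -> cg y y' -> cg (x * y) (x' * y').
Proof.
rewrite /cg => h1 h2.
have -> : x * y - x' * y' = (x - x') * y + x' * (y - y').
  by rewrite mulrBl mulrBr addrA subrK.
by apply: idD; [apply: idMr | apply: idMl].
Qed.
Lemma cg_opp x y : cg x y -> cg (- x) (- y).
Proof. by rewrite /cg -opprD; apply: idN. Qed.
Lemma cg0 x : x \in S -> cg x 0. Proof. by rewrite /cg subr0. Qed.
Lemma cg0' x : cg x 0 -> x \in S. Proof. by rewrite /cg subr0. Qed.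

Lemma core (b u w : T) : local_idem b ->
  b - (u + w) \in S -> u * u - u \in S -> w * w - w \in S ->
  u * w \in S -> w * u \in S -> u \in S \/ w \in S.
Proof.
move=> [bi [_ Hl]] hb huu hww huw hwu.
have hb' : cg b (u + w) by [].
have ub : cg (u * b) u.
  apply: (cg_trans (y := u * (u + w))); first exact: cg_mul (cg_refl u) hb'.
  rewrite mulrDr; apply: (cg_trans (y := u + 0)); last by rewrite addr0; apply: cg_refl.
  by apply: cg_addP => //; apply: cg0.
have wb : cg (w * b) w.
  apply: (cg_trans (y := w * (u + w))); first exact: cg_mul (cg_refl w) hb'.
  rewrite mulrDr; apply: (cg_trans (y := 0 + w)); last by rewrite add0r; apply: cg_refl.
  by apply: cg_addP => //; apply: cg0.
case: (Hl u) => /= [[z [h1 _]] | [z [h1 _]]].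
- right; apply: cg0'; apply: (cg_trans (y := w * b)); first exact: cg_sym.
  rewrite -{1}h1 mulrA.
  apply: (cg_trans (y := w * u * (b * z * b))); last first.
    by apply: cg0; apply: idMr.
  apply: cg_mul (cg_refl _).
  have -> : w * (b * u * b) = (w * b) * (u * b) by rewrite !mulrA.
  exact: cg_mul wb ub.
- left; apply: cg0'; apply: (cg_trans (y := u * b)); first exact: cg_sym.
  rewrite -{1}h1 mulrA mulrBr.
  apply: (cg_trans (y := (u - u) * (b * z * b))); last first.
    by rewrite subrr mul0r; apply: cg_refl.
  apply: cg_mul (cg_refl _); apply: cg_addP => //; apply: cg_opp.
  have -> : u * (b * u * b) = (u * b) * (u * b) by rewrite !mulrA.
  apply: (cg_trans (y := u * u)); [exact: (cg_mul ub ub) | exact: huu].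
Qed.
End IdealLemmas.

Section Sums.
Variables (T : nzRingType) (n : nat) (a : 'I_n -> T).
Hypothesis Hi : forall i, idem (a i).
Hypothesis Ho : forall i j, i != j -> orth (a i) (a j).

Lemma sumMr (Q : pred 'I_n) k :
  (\sum_(i | Q i) a i) * a k = if Q k then a k else 0.
Proof.
rewrite mulr_suml; case: (boolP (Q k)) => Qk.
  rewrite (bigD1 k) //= big1 ?addr0; first exact: Hi.
  by move=> i /andP[_ ik]; case: (Ho ik).
apply: big1 => i Qi; have ik : i != k by apply: contraNneq Qk => <-.
by case: (Ho ik).
Qed.

Lemma sumMl (Q : pred 'I_n) k :
  a k * (\sum_(i | Q i) a i) = if Q k then a k else 0.
Proof.
rewrite mulr_sumr; case: (boolP (Q k)) => Qk.
  rewrite (bigD1 k) //= big1 ?addr0; first exact: Hi.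
  by move=> i /andP[_ ik]; rewrite eq_sym in ik; case: (Ho ik).
apply: big1 => i Qi; have ik : k != i by apply: contraNneq Qk => ->.
by case: (Ho ik).
Qed.

Lemma sum_idem (Q : pred 'I_n) : idem (\sum_(i | Q i) a i).
Proof.
rewrite /idem mulr_sumr; apply: eq_bigr => i Qi.
by rewrite sumMr Qi.
Qed.
End Sums.

Theorem proposition4p7 (R : comPzRingType) (A B : algType R)
    (C J I : {pred A}) (K : {pred B}) (f : A -> B) (g : B -> A) :
  two_sided_ideal C -> two_sided_ideal J -> ideal_in C I ->
  two_sided_ideal K ->
  (* f : C -> B is R-linear (only its values on C matter) *)
  (forall x y, x \in C -> y \in C -> f (x + y) = f x + f y) ->
  (forall (r : R) x, x \in C -> f (r *: x) = r *: f x) ->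
  (* g : B -> C + J is R-linear *)
  (forall v, exists2 c, c \in C & exists2 j, j \in J & g v = c + j) ->
  (forall v w, g (v + w) = g v + g w) ->
  (forall (r : R) v, g (r *: v) = r *: g v) ->
  (* (1) *)
  (forall x y, x \in C -> x \in J -> y \in C -> x * y \in I) ->
  (forall x y, x \in C -> x \in J -> y \in C -> y * x \in I) ->
  (forall x, x \in I -> x \in C /\ x \in J) ->
  (* (2) *)
  (forall v, v \in K -> g v \in J) ->
  (* (3) *)
  (forall x, x \in I -> f x \in K) ->
  (* (4) *)
  (forall v, exists2 c, c \in C & f c = v) ->
  (* (5) *)
  (forall v, idem v -> idem (g v)) ->
  (* (6) *)
  (forall x y, x \in C -> y \in C -> f (x * y) - f x * f y \in K) ->
  (forall v w, g (v * w) - g v * g w \in J) ->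
  (* (7) *)
  (forall x, x \in C -> g (f x) - x \in J) ->
  (* (8) *)
  (forall e : A, idem e -> exists n (a : 'I_n -> A), local_decomp e a) ->
  (forall (e : A) n m (a : 'I_n -> A) (a' : 'I_m -> A),
      local_decomp e a -> local_decomp e a' ->
      exists u v, unitA u v /\
        exists h : 'I_n -> 'I_m, bijective h /\ forall i, a' (h i) = u * a i * v) ->
  forall b : B, local_idem b -> b \notin K ->
    (exists2 c, c \in C & exists2 j, j \in J & g b = c + j) /\
    idem (g b) /\
    (exists n (a : 'I_n -> A), local_decomp (g b) a) /\
    (forall n (a : 'I_n -> A), local_decomp (g b) a ->
       exists j : 'I_n,
         [/\ a j \in C, a j \notin J,
             (forall k : 'I_n, a k \in C -> a k \notin J -> k = j),
             g b - a j \in J & f (a j) - b \in K]).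
Proof.
move=> HC HJ HI HK fD fZ gCJ gD gZ H1l H1r H1s H2 H3 H4 H5 H6f H6g H7 H8e H8u
  b Hb bK.
split; first exact: gCJ.
split; first exact: H5 _ (proj1 Hb).
split; first exact: H8e _ (H5 _ (proj1 Hb)).
move=> n a [Hloc [Horth Hsum]].
have Hid : forall i, idem (a i) by move=> i; case: (Hloc i).
have f0 : f 0 = 0.
  apply: (@addrI _ (f 0)); rewrite -fD ?addr0 //; exact: id0.
have fB : forall x y, x \in C -> y \in C -> f (x - y) = f x - f y.
  move=> x y hx hy; have := fD (x - y) y (idB HC hx hy) hy.
  by rewrite subrK => ->; rewrite addrK.
have g0 : g 0 = 0 by apply: (@addrI _ (g 0)); rewrite -gD !addr0.
have gB : forall v w, g (v - w) = g v - g w.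
  by move=> v w; have := gD (v - w) w; rewrite subrK => ->; rewrite addrK.
have fCJK : forall x, x \in C -> x \in J -> f x \in K.
  move=> x hC hJ; have [c1 hc1 f1] := H4 1.
  have h1 := H6f x c1 hC hc1; have h2 := H3 _ (H1l x c1 hC hJ hc1).
  have := idB HK h2 h1; by rewrite opprB addrC subrK f1 mulr1.
have fKJ : forall c, c \in C -> f c \in K -> c \in J.
  move=> c hc hK; have := idB HJ (H2 _ hK) (H7 c hc).
  by rewrite opprB addrC subrK.
have gJK : forall v, g v \in J -> v \in K.
  move=> v hv; have [c hc fc] := H4 v; rewrite -fc; apply: fCJK => //.
  have := idB HJ hv (H7 c hc); by rewrite -fc opprB addrC subrK.
have [c0 hc0 [j0 hj0 gbE]] := gCJ b.
have dich : forall i, a i \in C \/ a i \in J.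
  move=> i; have [ai [_ Hl]] := Hloc i.
  have e1 : a i * g b = a i.
    by rewrite Hsum (sumMl Hid Horth xpredT) /=.
  have e2 : a i = a i * c0 * a i + a i * j0 * a i.
    by rewrite -mulrDl -mulrDr -gbE e1 ai.
  case: (Hl c0) => /= [[z [h _]] | [z [h _]]].
    left; rewrite -h; apply: (idMr HC); apply: (idMr HC); exact: idMl.
  right; rewrite -h; apply: (idMr HJ).
  have -> : a i - a i * c0 * a i = a i * j0 * a i by rewrite {1}e2 addrAC subrr add0r.
  apply: (idMr HJ); exact: idMl.
pose P i := (a i \in C) && (a i \notin J).
have Hsplit : g b = \sum_(i | P i) a i + \sum_(i | ~~ P i) a i.
  by rewrite Hsum (bigID P) /=.
have restJ : \sum_(i | ~~ P i) a i \in J.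
  apply: (id_sum HJ) => i; rewrite negb_and negbK; case/orP => // hC.
  by case: (dich i) => // h; rewrite h in hC.
case: (pickP P) => [j Pj | noP]; last first.
  exfalso; move/negP: bK; apply; apply: gJK.
  by rewrite Hsplit big_pred0 // add0r.
have /andP [ajC ajJ] := Pj.
pose Q i := P i && (i != j).
pose w := \sum_(i | Q i) a i.
have wC : w \in C.
  by apply: (id_sum HC) => i /andP[/andP[] ].
have wk : forall k, w * a k = if Q k then a k else 0 by move=> k; exact: sumMr.
have ww : idem w by exact: sum_idem.
have ajw : a j * w = 0 by rewrite (sumMl Hid Horth) /Q eqxx andbF.
have waj : w * a j = 0 by rewrite wk /Q eqxx andbF.
have Hgw : g b - (a j + w) \in J.
  by rewrite Hsplit (bigD1 j) //= [_ + \sum_(i | ~~ P i) a i]addrC addrK.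
have HfK : f (a j) + f w - b \in K.
  rewrite -fD //; apply: gJK; rewrite gB.
  have hC : a j + w \in C by apply: idD.
  have := idB HJ (H7 _ hC) Hgw.
  by rewrite opprB addrA subrK.
have := core HK Hb (u := f (a j)) (w := f w).
case.
- by rewrite -opprB; apply: idN.
- have := H6f _ _ ajC ajC; rewrite Hid => h; rewrite -opprB; exact: idN.
- have := H6f _ _ wC wC; rewrite ww => h; rewrite -opprB; exact: idN.
- have := H6f _ _ ajC wC; rewrite ajw f0 sub0r => h.
  by rewrite -(opprK (_ * _)); apply: idN.
- have := H6f _ _ wC ajC; rewrite waj f0 sub0r => h.
  by rewrite -(opprK (_ * _)); apply: idN.
- by move/(fKJ _ ajC); rewrite (negbTE ajJ).
move=> fwK; have wJ := fKJ _ wC fwK.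
exists j; split => //.
- move=> k akC akJ; apply/eqP; apply: contraNT akJ => kj.
  have : w * a k \in J by apply: idMr.
  case: (boolP (a k \in J)) => // nJ; have e : w * a k = a k by rewrite wk /Q /P akC nJ kj.
  by rewrite e (negbTE nJ).
- have -> : g b - a j = g b - (a j + w) + w by rewrite opprD addrA subrK.
  exact: (idD HJ Hgw wJ).
- have -> : f (a j) - b = f (a j) + f w - b - f w by rewrite addrAC addrK.
  exact: (idB HK HfK fwK).
Qed.
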